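(* Let $A$ be a finite-dimensional Leibniz algebra over a field. Then $A$ is nilpotent if and only if $A$ satisfies condition $k$, i.e. the only subalgebra $K$ of $A$ with $K+A^2=A$ is $K=A$.
   Context: A (left) Leibniz algebra is an algebra satisfying $x(yz)=(xy)z+y(xz)$ for all $x,y,z$. $A^2=AA$; lower central series $A^1=A$, $A^{j+1}=AA^j$; $A$ is nilpotent if $A^t=0$ for some $t$. *)

(* Defs.v *)
From HB Require Import structures.
From mathcomp Require Import all_boot all_order all_algebra.
Set Implicit Arguments. Unset Strict Implicit. Unset Printing Implicit Defensive.
Import GRing.Theory.
Local Open Scope ring_scope.

Section Leibniz.
Variables (F : fieldType) (V : vectType F) (mul : V -> V -> V).

Definition bilinear_mul : Prop :=
  (forall (a : F) x y z, mul (a *: x + y) z = a *: mul x z + mul y z) /\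
  (forall (a : F) x y z, mul x (a *: y + z) = a *: mul x y + mul x z).

Definition left_leibniz : Prop :=
  forall x y z, mul x (mul y z) = mul (mul x y) z + mul y (mul x z).

Definition leibniz_algebra : Prop := bilinear_mul /\ left_leibniz.

(* product UW of subspaces: the span of all products u w, u in U, w in W;
   by bilinearity this is the span of products of basis vectors. *)
Definition prodv (U W : {vspace V}) : {vspace V} :=
  <<[seq mul u w | u <- vbasis U, w <- vbasis W]>>%VS.

(* lower central series, shifted: lcs j = A^(j+1); lcs 0 = A, lcs (j+1) = A (lcs j) *)
Fixpoint lcs (j : nat) : {vspace V} :=
  if j is j'.+1 then prodv fullv (lcs j') else fullv.

Definition nilpotent_alg : Prop := exists t : nat, lcs t = 0%VS.

Definition subalgebra (K : {vspace V}) : Prop :=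
  forall x y, x \in K -> y \in K -> mul x y \in K.

Definition condition_k : Prop :=
  forall K : {vspace V}, subalgebra K -> ((K + prodv fullv fullv)%VS = fullv) -> K = fullv.

End Leibniz.

(* Main.v *)
Require Import Defs.
From HB Require Import structures.
From mathcomp Require Import all_boot all_order all_algebra.
From Stdlib Require Classical_Prop.
Set Implicit Arguments. Unset Strict Implicit. Unset Printing Implicit Defensive.
Import GRing.Theory.
Local Open Scope ring_scope.

Section S.
Variables (F : fieldType) (V : vectType F) (mul : V -> V -> V).
Hypothesis Hbil : bilinear_mul mul.
Hypothesis Hleib : left_leibniz mul.

Lemma mulDl x y z : mul (x + y) z = mul x z + mul y z.
Proof. by have := (proj1 Hbil) 1 x y z; rewrite !scale1r. Qed.
Lemma mulDr x y z : mul x (y + z) = mul x y + mul x z.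
Proof. by have := (proj2 Hbil) 1 x y z; rewrite !scale1r. Qed.
Lemma mul0l z : mul 0 z = 0.
Proof. by apply: (addrI (mul 0 z)); rewrite addr0 -mulDl addr0. Qed.
Lemma mul0r z : mul z 0 = 0.
Proof. by apply: (addrI (mul z 0)); rewrite addr0 -mulDr addr0. Qed.
Lemma mulZl a x z : mul (a *: x) z = a *: mul x z.
Proof. by have := (proj1 Hbil) a x 0 z; rewrite !addr0 mul0l addr0. Qed.
Lemma mulZr a x z : mul x (a *: z) = a *: mul x z.
Proof. by have := (proj2 Hbil) a x z 0; rewrite !addr0 mul0r addr0. Qed.
Lemma mulNl x z : mul (- x) z = - mul x z.
Proof. by rewrite -scaleN1r mulZl scaleN1r. Qed.
Lemma mulNr x z : mul x (- z) = - mul x z.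
Proof. by rewrite -scaleN1r mulZr scaleN1r. Qed.

Lemma span_ind (s : seq V) (P : V -> Prop) :
  P 0 -> (forall x y, P x -> P y -> P (x + y)) -> (forall a x, P x -> P (a *: x)) ->
  (forall x, x \in s -> P x) -> forall v, v \in <<s>>%VS -> P v.
Proof.
move=> P0 PD PZ Ps v; rewrite -[s]/(tval (in_tuple s)) => /coord_span ->.
apply: (big_ind P) => // i _; apply: PZ; apply: Ps; by apply: mem_nth; exact: ltn_ord.
Qed.

Lemma mem_prodv (U W : {vspace V}) u w : u \in U -> w \in W -> mul u w \in prodv mul U W.
Proof.
rewrite -{1}(span_basis (vbasisP U)) => Hu; rewrite -{1}(span_basis (vbasisP W)) => Hw.
move: u Hu; apply: span_ind.
- by rewrite mul0l mem0v.
- by move=> x y Hx Hy; rewrite mulDl memvD.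
- by move=> a x Hx; rewrite mulZl memvZ.
move=> u Hu; move: w Hw; apply: span_ind.
- by rewrite mul0r mem0v.
- by move=> x y Hx Hy; rewrite mulDr memvD.
- by move=> a x Hx; rewrite mulZr memvZ.
by move=> w Hw; apply: memv_span; apply: allpairs_f.
Qed.

Lemma prodv_ind (U W : {vspace V}) (P : V -> Prop) :
  P 0 -> (forall x y, P x -> P y -> P (x + y)) -> (forall a x, P x -> P (a *: x)) ->
  (forall u w, u \in U -> w \in W -> P (mul u w)) ->
  forall y, y \in prodv mul U W -> P y.
Proof.
move=> P0 PD PZ Pg; apply: span_ind => // x /allpairsP [[u w] /= [Hu Hw ->]].
by apply: Pg; apply: vbasis_mem.
Qed.

Lemma lcs_mul i j y z : y \in lcs mul i -> z \in lcs mul j -> mul y z \in lcs mul (i + j).+1.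
Proof.
elim: i j y z => [|i IH] j y z Hy Hz.
  by rewrite add0n /=; apply: mem_prodv => //; apply: memvf.
move: y Hy; apply: prodv_ind.
- by rewrite mul0l mem0v.
- by move=> x x' Hx Hx'; rewrite mulDl memvD.
- by move=> a x Hx; rewrite mulZl memvZ.
move=> u w _ Hw.
have -> : mul (mul u w) z = mul u (mul w z) - mul w (mul u z).
  by rewrite Hleib addrK.
apply: memvB.
  by rewrite addSn; apply: mem_prodv (memvf _) (IH _ _ _ Hw Hz).
have Huz : mul u z \in lcs mul j.+1 by apply: mem_prodv (memvf _) Hz.
by rewrite addSn -addnS; apply: IH.
Qed.

Lemma lcs_decr j : (lcs mul j.+1 <= lcs mul j)%VS.
Proof.
elim: j => [|j IH]; first exact: subvf.
apply/subvP; apply: prodv_ind.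
- exact: mem0v.
- by move=> x y Hx Hy; rewrite memvD.
- by move=> a x Hx; rewrite memvZ.
by move=> u w Hu Hw; apply: mem_prodv Hu (subvP IH _ Hw).
Qed.

Lemma lcs_le i j : (i <= j)%N -> (lcs mul j <= lcs mul i)%VS.
Proof.
move/subnK <-; elim: (j - i)%N => [|k IH]; first exact: subvv.
by rewrite addSn; apply: subv_trans (lcs_decr _) IH.
Qed.

Lemma nil_k : nilpotent_alg mul -> condition_k mul.
Proof.
move=> [t Ht] K HK HKA.
have step : forall j, forall v, v \in (K + lcs mul j.+1)%VS.
  elim=> [|j IH] v; first by rewrite HKA memvf.
  have H1 : forall y, y \in lcs mul 1 -> y \in (K + lcs mul j.+2)%VS.
    apply: prodv_ind.
    - exact: mem0v.
    - by move=> x y Hx Hy; rewrite memvD.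
    - by move=> a x Hx; rewrite memvZ.
    move=> u w _ _.
    case/memv_addP: (IH u) => k1 Hk1 [b1 Hb1 ->].
    case/memv_addP: (IH w) => k2 Hk2 [b2 Hb2 ->].
    rewrite !mulDl !mulDr.
    have L0 : forall x, x \in lcs mul 0 by move=> x; apply: memvf.
    have G : forall x, x \in lcs mul j.+2 -> x \in (K + lcs mul j.+2)%VS.
      by move=> x Hx; rewrite -[x]add0r; apply: memv_add (mem0v _) Hx.
    rewrite !memvD //.
    - by rewrite -[mul k1 k2]addr0; apply: memv_add (HK _ _ Hk1 Hk2) (mem0v _).
    - by apply: G; have := lcs_mul (L0 k1) Hb2.
    - by apply: G; have := lcs_mul Hb1 (L0 k2); rewrite addn0.
    apply: G; apply: (subvP (lcs_le _)) (lcs_mul Hb1 Hb2).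
    by rewrite addSn ltnS leq_addr.
  case/memv_addP: (IH v) => k Hk [b Hb ->].
  case/memv_addP: (H1 b (subvP (lcs_le (isT : (1 <= j.+1)%N)) _ Hb)) => k' Hk' [b' Hb' ->].
  by rewrite addrA; apply: memv_add Hb'; apply: memvD.
apply/eqP; rewrite eqEsubv subvf /=; apply/subvP => v _.
have E : lcs mul t.+1 = 0%VS by apply: subv_anti; rewrite sub0v andbT -Ht lcs_decr.
by have := step t v; rewrite E addv0.
Qed.

Lemma iter_add x n u v : iter n (mul x) (u + v) = iter n (mul x) u + iter n (mul x) v.
Proof. by elim: n => //= n ->; rewrite mulDr. Qed.
Lemma iter_scale x n a u : iter n (mul x) (a *: u) = a *: iter n (mul x) u.
Proof. by elim: n => //= n ->; rewrite mulZr. Qed.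
Lemma iter_0 x n : iter n (mul x) 0 = 0.
Proof. by elim: n => //= n ->; rewrite mul0r. Qed.

Definition Lit (x : V) (n : nat) : V -> V := iter n (mul x).
Lemma Lit_linear x n : linear (Lit x n).
Proof. by move=> a u v; rewrite /Lit iter_add iter_scale. Qed.
HB.instance Definition _ x n := GRing.isSemilinear.Build F V V _ (Lit x n)
  (GRing.semilinear_linear (@Lit_linear x n)).

Definition gL x n : 'End(V) := linfun (Lit x n).
Lemma gLE x n v : gL x n v = iter n (mul x) v.
Proof. by rewrite /gL lfunE. Qed.

Lemma deriv_nil x n : forall a b y z, (a + b = n)%N ->
  iter a (mul x) y = 0 -> iter b (mul x) z = 0 -> iter n (mul x) (mul y z) = 0.
Proof.
elim: n => [|n IH] a b y z Hab Hy Hz.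
  case: a Hab Hy => [|a] //= _ Hy; by rewrite Hy mul0l.
case: a Hab Hy => [|a] Hab Hy; first by rewrite /= in Hy; rewrite Hy mul0l iter_0.
case: b Hab Hz => [|b] Hab Hz; first by rewrite /= in Hz; rewrite Hz mul0r iter_0.
rewrite iterSr Hleib.
move: Hab; rewrite addSn => -[Hab].
rewrite iter_add (IH a b.+1) ?(IH a.+1 b) ?addr0 //.
all: try by rewrite -iterSr.
by rewrite addSn -addnS.
Qed.

Definition kerL x k : {vspace V} := lker (gL x k).
Lemma mem_kerL x k v : (v \in kerL x k) = (iter k (mul x) v == 0).
Proof. by rewrite /kerL memv_ker gLE. Qed.

Lemma kerL_S x k : (kerL x k <= kerL x k.+1)%VS.
Proof. by apply/subvP => v; rewrite !mem_kerL /= => /eqP ->; rewrite mul0r. Qed.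

Lemma kerL_stab_ex x : exists2 j, (j <= \dim (fullv : {vspace V}))%N & kerL x j = kerL x j.+1.
Proof.
set d := \dim (fullv : {vspace V}).
have H : forall k, (exists2 j, (j < k)%N & kerL x j = kerL x j.+1) \/ (k <= \dim (kerL x k))%N.
  elim=> [|k [[j Hj E]|Hk]]; [by right | by left; exists j => //; apply: ltnW |].
  case: (eqVneq (kerL x k) (kerL x k.+1)) => [E|Ne]; first by left; exists k.
  right; apply: leq_ltn_trans Hk _.
  by rewrite ltn_neqAle (dimv_leqif_eq (kerL_S x k)) Ne dimvS // kerL_S.
case: (H d.+1) => [[j Hj E]|Hk]; first by exists j.
by have := leq_trans Hk (dimvS (subvf (kerL x d.+1))); rewrite ltnn.
Qed.

Lemma kerL_stab x : forall v, iter ((\dim (fullv : {vspace V})).+1 * 2) (mul x) v = 0 ->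
  iter (\dim (fullv : {vspace V})).+1 (mul x) v = 0.
Proof.
case: (kerL_stab_ex x) => j Hj E.
have St : forall m, kerL x (j + m) = kerL x j.
  elim=> [|m IH]; first by rewrite addn0.
  apply: subv_anti; apply/andP; split; last first.
    by rewrite -{1}IH addnS kerL_S.
  apply/subvP => v; rewrite addnS mem_kerL iterSr -mem_kerL IH mem_kerL -iterSr.
  by rewrite -mem_kerL -E.
move=> v /eqP; rewrite -mem_kerL -(@subnKC j ((\dim (fullv : {vspace V})).+1 * 2)) ?St; last first.
  by rewrite muln2 -addnn ltnW // ltnS (leq_trans Hj) // leq_addr.
move=> H; apply/eqP; rewrite -mem_kerL -(@subnKC j (\dim (fullv : {vspace V})).+1) ?St //.
by rewrite ltnW.
Qed.


Lemma k_Lnil : condition_k mul -> forall x v,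
  iter (\dim (fullv : {vspace V})).+1 (mul x) v = 0.
Proof.
move=> Hk x.
set N := (\dim (fullv : {vspace V})).+1.
set K := kerL x N. set Im := limg (gL x N).
have HKsub : subalgebra mul K.
  move=> y z; rewrite !mem_kerL => /eqP Hy /eqP Hz; apply/eqP; apply: kerL_stab.
  by apply: (deriv_nil (a:=N) (b:=N)) => //; rewrite muln2 addnn.
have Hcap : (K :&: Im = 0)%VS.
  apply/eqP; rewrite -subv0; apply/subvP => v /memv_capP [HK /memv_imgP [u _ Hv]].
  rewrite Hv in HK *.
  rewrite memv0 (gLE x N u); apply/eqP; apply: kerL_stab.
  by move: HK; rewrite mem_kerL gLE -iterD addnn -muln2 => /eqP.
have HKI : (K + Im = fullv)%VS.
  apply/eqP; rewrite eqEdim subvf /=.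
  have := dimv_sum_cap K Im; rewrite Hcap dimv0 addn0 => ->.
  by have := limg_ker_dim (gL x N) fullv; rewrite capfv addnC => <-.
have HIm : (Im <= prodv mul fullv fullv)%VS.
  apply/subvP => v /memv_imgP [u _ ->]; rewrite gLE iterS.
  by apply: mem_prodv; apply: memvf.
have HK : K = fullv.
  apply: Hk => //; apply: subv_anti; rewrite subvf /= -{1}HKI.
  by apply: addvS => //; apply: subvv.
by move=> v; apply/eqP; rewrite -mem_kerL -/N -/K HK memvf.
Qed.

Definition S0 : {vspace V} :=
  <<[seq mul u u | u <- vbasis (fullv : {vspace V})] ++
    [seq (mul u w + mul w u)%R | u <- vbasis (fullv : {vspace V}), w <- vbasis (fullv : {vspace V})]>>%VS.

Lemma full_span (P : V -> Prop) :
  P 0 -> (forall x y, P x -> P y -> P (x + y)) -> (forall a x, P x -> P (a *: x)) ->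
  (forall x, x \in vbasis (fullv : {vspace V}) -> P x) -> forall v, P v.
Proof.
move=> P0 PD PZ Pb v; apply: (span_ind P0 PD PZ Pb).
by rewrite (span_basis (vbasisP fullv)) memvf.
Qed.

Lemma S0_sym x y : mul x y + mul y x \in S0.
Proof.
move: x y; apply: full_span.
- by move=> y; rewrite mul0l mul0r addr0 mem0v.
- move=> x x' Hx Hx' y; rewrite mulDl mulDr addrACA; exact: memvD.
- by move=> a x Hx y; rewrite mulZl mulZr -scalerDr memvZ.
move=> u Hu; apply: full_span.
- by rewrite mul0l mul0r addr0 mem0v.
- by move=> y y' Hy Hy'; rewrite mulDl mulDr addrACA memvD.
- by move=> a y Hy; rewrite mulZl mulZr -scalerDr memvZ.
move=> w Hw; apply: memv_span; rewrite mem_cat; apply/orP; right.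
exact: allpairs_f.
Qed.

Lemma S0_sq x : mul x x \in S0.
Proof.
move: x; apply: full_span.
- by rewrite mul0l mem0v.
- move=> x y Hx Hy; rewrite mulDl !mulDr.
  have -> : mul x x + mul x y + (mul y x + mul y y) = mul x x + mul y y + (mul x y + mul y x).
    by rewrite -!addrA; congr (_ + _); rewrite addrA addrC.
  by apply: memvD; [apply: memvD | apply: S0_sym].
- by move=> a x Hx; rewrite mulZl mulZr scalerA memvZ.
move=> u Hu; apply: memv_span; rewrite mem_cat; apply/orP; left.
exact: map_f.
Qed.

Lemma S0_act s v : s \in S0 -> mul s v = 0.
Proof.
move: s; apply: span_ind.
- by rewrite mul0l.
- by move=> x y Hx Hy; rewrite mulDl Hx Hy addr0.
- by move=> a x Hx; rewrite mulZl Hx scaler0.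
move=> s; rewrite mem_cat => /orP [/mapP [u _ ->] | /allpairsP [[u w] /= [_ _ ->]]].
  by apply: (addIr (mul u (mul u v))); rewrite add0r -Hleib.
have E1 : mul (mul u w) v = mul u (mul w v) - mul w (mul u v) by rewrite Hleib addrK.
have E2 : mul (mul w u) v = mul w (mul u v) - mul u (mul w v) by rewrite Hleib addrK.
by rewrite mulDl E1 E2 addrA subrK subrr.
Qed.

Lemma maxv (P : {vspace V} -> Prop) M0 : P M0 ->
  exists M, [/\ P M, (M0 <= M)%VS & forall M', P M' -> (M <= M')%VS -> M' = M].
Proof.
move: {2}(\dim (fullv : {vspace V}) - \dim M0)%N (leqnn (\dim (fullv : {vspace V}) - \dim M0)%N) => n.
elim: n M0 => [|n IH] M0 Hn HM0.
  exists M0; split => // M' _ HM; apply: subv_anti; rewrite HM andbT.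
  have : (\dim M0 >= \dim (fullv : {vspace V}))%N by rewrite -subn_eq0 -leqn0.
  move=> Hd; move: (dimvS (subvf M')) => Hd'.
  have : M0 == M' by rewrite eqEdim HM (leq_trans Hd').
  by move/eqP <-; apply: subvv.
case: (Classical_Prop.classic (exists M', [/\ P M', (M0 <= M')%VS & M' != M0])).
  move=> [M' [HM' HM0M' Ne]].
  have Hlt : (\dim M0 < \dim M')%N.
    by rewrite ltn_neqAle (dimv_leqif_eq HM0M') eq_sym Ne dimvS.
  have [M [HM HM'M Hmax]] : exists M, [/\ P M, (M' <= M)%VS & forall M'', P M'' -> (M <= M'')%VS -> M'' = M].
    apply: IH HM'; rewrite -ltnS; apply: leq_trans Hn.
    by rewrite ltn_sub2l // (leq_trans Hlt) // dimvS // subvf.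
  by exists M; split => //; apply: subv_trans HM'M.
move=> Hno; exists M0; split; [done | exact: subvv |].
move=> M' HM' HM; case: (eqVneq M' M0) => // Ne; exfalso; apply: Hno; exists M'; split => //.
Qed.

Definition quasi (S : {vspace V}) := subalgebra mul S /\ (S0 <= S)%VS.
Definition invar (S W : {vspace V}) := forall s w, s \in S -> w \in W -> mul s w \in W.

Lemma engel_aux (Hnil : forall x v, exists k, iter k (mul x) v = 0) n :
  forall S : {vspace V}, (\dim S < n)%N -> quasi S ->
  forall W1 W2 : {vspace V}, (W2 <= W1)%VS -> W2 != W1 -> invar S W1 -> invar S W2 ->
  exists2 w, w \in W1 & (w \notin W2) /\ (forall s, s \in S -> mul s w \in W2).
Proof.
elim: n => [|n IH] S HdS [HSa HS0] W1 W2 H21 Ne I1 I2; first by rewrite ltn0 in HdS.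
have [w0 Hw0 Hw0n] : exists2 w, w \in W1 & w \notin W2.
  apply/subvPn; apply: contra Ne => H12; apply/eqP; apply: subv_anti.
  by rewrite H21 H12.
case: (eqVneq S S0) => [ES | NeS].
  exists w0 => //; split => // s Hs; rewrite S0_act ?mem0v //.
  by rewrite -ES.
set P := fun M : {vspace V} => [/\ subalgebra mul M, (S0 <= M)%VS, (M <= S)%VS & M != S].
have PS0 : P S0.
  split; [ | exact: subvv | exact: HS0 | by rewrite eq_sym].
  by move=> s t Hs _; rewrite S0_act ?mem0v.
have [M [[HMa HMS0 HMS HMne] _ Hmax]] := maxv PS0.
have HdM : (\dim M < n)%N.
  rewrite -ltnS; apply: leq_trans HdS; rewrite ltnS.
  by rewrite ltn_neqAle (dimv_leqif_eq HMS) HMne dimvS.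
have HqM : quasi M by [].
have IMS : invar M S by move=> m s Hm Hs; apply: HSa => //; apply: (subvP HMS).
have IMM : invar M M by move=> m s Hm Hs; apply: HMa.
have [y Hy [Hyn HyM]] := IH M HdM HqM S M HMS HMne IMS IMM.
have HyM' : forall m, m \in M -> mul y m \in M.
  move=> m Hm.
  have -> : mul y m = (mul y m + mul m y) - mul m y by rewrite addrK.
  by apply: memvB; [apply: (subvP HMS0); apply: S0_sym | apply: HyM].
set M' := (M + <[y]>)%VS.
have HM'S : M' = S.
  case: (eqVneq M' S) => // NeM'.
  have PM' : P M'.
    split => //.
    - move=> a b /memv_addP [m1 Hm1 [c1 /vlineP [k1 ->] ->]] /memv_addP [m2 Hm2 [c2 /vlineP [k2 ->] ->]].
      apply: (subvP (addvSl M <[y]>)).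
      rewrite !mulDl !mulDr !mulZl !mulZr.
      apply: memvD; [apply: memvD; [exact: HMa | apply: memvZ; exact: HyM] |].
      apply: memvD; apply: memvZ; first exact: HyM'.
      by apply: memvZ; apply: (subvP HMS0); apply: S0_sq.
    - exact: subv_trans HMS0 (addvSl _ _).
    - by rewrite subv_add HMS -memvE.
  have := Hmax M' PM' (addvSl _ _) => EM.
  have : y \in M' by rewrite -[y]add0r; apply: memv_add (mem0v _) (memv_line y).
  by rewrite EM (negbTE Hyn).
have IM1 : invar M W1 by move=> m w Hm Hw; apply: I1 => //; apply: (subvP HMS).
have IM2 : invar M W2 by move=> m w Hm Hw; apply: I2 => //; apply: (subvP HMS).
have [w Hw [Hwn HwM]] := IH M HdM HqM W1 W2 H21 Ne IM1 IM2.
have Hit : forall k, iter k (mul y) w \in W1 /\ forall m, m \in M -> mul m (iter k (mul y) w) \in W2.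
  elim=> [|k [IH1 IH2]]; first by split.
  split; first by rewrite iterS; apply: I1.
  move=> m Hm; rewrite iterS Hleib; apply: memvD; first by apply: IH2; apply: HyM.
  by apply: I2 => //; apply: IH2.
have exP : exists k, iter k (mul y) w \in W2.
  by have [k Hk] := Hnil y w; exists k; rewrite Hk mem0v.
case: (ex_minnP exP) => k Hk Hmin.
case: k Hk Hmin => [|k] Hk Hmin; first by rewrite /= (negbTE Hwn) in Hk.
exists (iter k (mul y) w); first by case: (Hit k).
split.
  by apply/negP => Hin; have := Hmin k Hin; rewrite ltnn.
move=> s; rewrite -HM'S => /memv_addP [m Hm [c /vlineP [a ->] ->]].
rewrite mulDl mulZl; apply: memvD; first by case: (Hit k) => _; apply.
by apply: memvZ; rewrite -iterS.
Qed.

Lemma AB_lt (Hnil : forall x v, exists k, iter k (mul x) v = 0) (B : {vspace V}) :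
  B != 0%VS -> invar fullv B -> prodv mul fullv B != B.
Proof.
move=> HB IB.
set P := fun W : {vspace V} => [/\ (W <= B)%VS, W != B & invar fullv W].
have P0 : P 0%VS.
  split; [exact: sub0v | by rewrite eq_sym | by move=> s w _; rewrite memv0 => /eqP ->; rewrite mul0r mem0v].
have [W2 [[HW2B HW2ne IW2] _ Hmax]] := maxv P0.
have Hq : quasi fullv by split; [move=> *; exact: memvf | exact: subvf].
have [w Hw [Hwn HwA]] := engel_aux Hnil (ltnSn (\dim (fullv : {vspace V}))) Hq HW2B HW2ne IB IW2.
set W' := (W2 + <[w]>)%VS.
have HW' : W' = B.
  case: (eqVneq W' B) => // Ne.
  have PW' : P W'.
    split => //; first by rewrite subv_add HW2B -memvE.
    move=> s v Hs /memv_addP [a Ha [c /vlineP [k ->] ->]].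
    apply: (subvP (addvSl W2 <[w]>)).
    by rewrite mulDr mulZr; apply: memvD; [apply: IW2 | apply: memvZ; apply: HwA].
  have EW := Hmax W' PW' (addvSl _ _).
  have : w \in W' by rewrite -[w]add0r; apply: memv_add (mem0v _) (memv_line w).
  by rewrite EW (negbTE Hwn).
have Hsub : (prodv mul fullv B <= W2)%VS.
  apply/subvP; apply: prodv_ind.
  - exact: mem0v.
  - by move=> x y Hx Hy; apply: memvD.
  - by move=> a x Hx; apply: memvZ.
  move=> u b _; rewrite -HW' => /memv_addP [a Ha [c /vlineP [k ->] ->]].
  by rewrite mulDr mulZr; apply: memvD; [apply: IW2 => //; apply: memvf | apply: memvZ; apply: HwA; apply: memvf].
apply/negP => /eqP E; move: HW2ne; rewrite -E; apply/negP; rewrite negbK.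
by apply/eqP; apply: subv_anti; rewrite Hsub andbT E.
Qed.

Lemma k_nil : condition_k mul -> nilpotent_alg mul.
Proof.
move=> Hk.
have Hnil : forall x v, exists k, iter k (mul x) v = 0.
  by move=> x v; exists (\dim (fullv : {vspace V})).+1; apply: k_Lnil.
set d := \dim (fullv : {vspace V}).
have H : forall j, (lcs mul j == 0%VS) || (j + \dim (lcs mul j) <= d)%N.
  elim=> [|j IH]; first by rewrite add0n leqnn orbT.
  case: (eqVneq (lcs mul j) 0%VS) => [E|NE].
    apply/orP; left; apply/eqP; apply: subv_anti; rewrite sub0v andbT -E.
    exact: lcs_decr.
  move: IH; rewrite (negbTE NE) /= => IH.
  apply/orP; right; apply: leq_trans IH; rewrite addSn -addnS leq_add2l.
  have IB : invar fullv (lcs mul j).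
    move=> s w _ Hw; apply: (subvP (lcs_decr j)); apply: mem_prodv => //; exact: memvf.
  have := AB_lt Hnil NE IB => Ne.
  by rewrite ltn_neqAle (dimv_leqif_eq (lcs_decr j)) Ne dimvS // lcs_decr.
exists d.+1; move: (H d.+1) => /orP [/eqP //|].
by rewrite ltnNge leq_addr.
Qed.
End S.

Theorem mainTheorem3 (F : fieldType) (V : vectType F) (mul : V -> V -> V) :
  leibniz_algebra mul -> (nilpotent_alg mul <-> condition_k mul).
Proof.
move=> [Hbil Hleib]; split; [exact: nil_k | exact: k_nil].
Qed.
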